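(* Let $\mathcal D$ be a distribution over $\mathcal X\times\{0,1\}$ with $\Pr_{(x,y)\sim\mathcal D}[y=0]\in[1/2-b_1,1/2+b_1]$ for some $b_1>0$. Let $\mathcal D_{\mathrm{shift}}$ be a distribution over $\mathcal X\times\{0,1\}$ whose class-conditional distributions equal those of $\mathcal D$, i.e., $\mathcal D_{\mathrm{shift}}(\cdot\mid Y=y)=\mathcal D(\cdot\mid Y=y)$ for all $y\in\{0,1\}$, and with $\Pr_{(x,y)\sim\mathcal D_{\mathrm{shift}}}[y=0]\in[1/2+b_2,1/2+b_3]$ for $b_1<b_2<b_3<1/2$. Let $h:\mathcal X\to\{0,1\}$ satisfy $\ell_{\mathcal D_{\mathrm{shift}}}(h):=\Pr_{(x,y)\sim\mathcal D_{\mathrm{shift}}}[h(x)\ne y]\le\Pr_{(x,y)\sim\mathcal D_{\mathrm{shift}}}[y=1]/2$. Then $\ell_{\mathcal D}(h):=\Pr_{(x,y)\sim\mathcal D}[h(x)\ne y]\le1/4+b_1/2$. *)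

(* Defs.v *)
From HB Require Import structures.
From mathcomp Require Import all_boot all_order all_algebra.
From mathcomp Require Import all_classical all_reals all_analysis.
Set Implicit Arguments. Unset Strict Implicit. Unset Printing Implicit Defensive.
Import Order.TTheory GRing.Theory Num.Theory.
Local Open Scope classical_set_scope.
Local Open Scope ring_scope.

Definition Pr {d} {T : measurableType d} {R : realType}
  (P : probability T R) (A : set T) : R := fine (P A).

Definition label_prob {d} {X : measurableType d} {R : realType}
  (P : probability (X * bool)%type R) (b : bool) : R :=
  Pr P [set xy | xy.2 = b].

Definition class_cond {d} {X : measurableType d} {R : realType}
  (P : probability (X * bool)%type R) (b : bool) (A : set X) : R :=
  Pr P [set xy | xy.1 \in A /\ xy.2 = b] / label_prob P b.

Definition loss01 {d} {X : measurableType d} {R : realType}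
  (P : probability (X * bool)%type R) (h : X -> bool) : R :=
  Pr P [set xy | h xy.1 != xy.2].

(* Main.v *)
Require Import Defs.
From HB Require Import structures.
From mathcomp Require Import all_boot all_order all_algebra.
From mathcomp Require Import all_classical all_reals all_analysis.
From mathcomp Require Import lra.
Import Order.TTheory GRing.Theory Num.Theory.
Local Open Scope classical_set_scope.
Local Open Scope ring_scope.

Lemma PrC d (T : measurableType d) (R : realType) (P : probability T R) (A : set T) :
  measurable A -> Pr P (~` A) = 1 - Pr P A.
Proof.
move=> mA; have fA : P A \is a fin_num := fin_num_measure P _ mA.
by rewrite /Pr probability_setC // -[P A]fineK // -EFinB.
Qed.

Lemma PrU d (T : measurableType d) (R : realType) (P : probability T R) (A B : set T) :
  measurable A -> measurable B -> A `&` B = set0 -> Pr P (A `|` B) = Pr P A + Pr P B.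
Proof.
move=> mA mB AB.
have fA : P A \is a fin_num := fin_num_measure P _ mA.
have fB : P B \is a fin_num := fin_num_measure P _ mB.
by rewrite /Pr measureU // fineD.
Qed.

Lemma Pr_ge0 d (T : measurableType d) (R : realType) (P : probability T R) (A : set T) :
  0 <= Pr P A.
Proof. by rewrite /Pr fine_ge0 // measure_ge0. Qed.

Lemma alg (R : realFieldType) (p q a0 a1 : R) :
  0 < p -> p < q -> q < 1 -> 0 <= a0 -> 0 <= a1 ->
  q * (a0 / p) + (1 - q) * (a1 / (1 - p)) <= (1 - q) / 2 ->
  a0 + a1 <= (1 - p) / 2.
Proof.
move=> p0 pq q1 a00 a10 H.
have p1 : 0 < 1 - p by lra.
set e0 := a0 / p in H; set e1 := a1 / (1 - p) in H.
have -> : a0 = p * e0 by rewrite /e0 mulrC divfK // gt_eqF.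
have -> : a1 = (1 - p) * e1 by rewrite /e1 mulrC divfK // gt_eqF.
have e00 : 0 <= e0 by rewrite /e0 divr_ge0 // ltW.
have e10 : 0 <= e1 by rewrite /e1 divr_ge0 // ltW.
have h1 : 0 <= (q - p) * e0 by rewrite mulr_ge0 // subr_ge0 ltW.
have h2 : (1 - p) * (q * e0 + (1 - q) * e1) <= (1 - p) * ((1 - q) / 2)
  by rewrite ler_wpM2l // ltW.
nra.
Qed.

Theorem lemma10p8 (d : measure_display) (X : measurableType d) (R : realType)
  (D Dshift : probability (X * bool)%type R) (b1 b2 b3 : R) (h : X -> bool) :
  0 < b1 -> b1 < b2 -> b2 < b3 -> b3 < 1/2 ->
  1/2 - b1 <= label_prob D false <= 1/2 + b1 ->
  (forall (y : bool) (A : set X), measurable A ->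
     class_cond Dshift y A = class_cond D y A) ->
  1/2 + b2 <= label_prob Dshift false <= 1/2 + b3 ->
  measurable_fun setT h ->
  loss01 Dshift h <= label_prob Dshift true / 2 ->
  loss01 D h <= 1/4 + b1/2.
Proof.
move=> b10 b12 b23 b3h /andP[Dp1 Dp2] Hcc /andP[Sq1 Sq2] mh Hl.
have mpre : forall b, measurable (h @^-1` [set b]).
  by move=> b; rewrite -[_ @^-1` _]setTI; apply: mh.
set A0 := h @^-1` [set true]; set A1 := h @^-1` [set false].
have mE : forall (A : set X) b, measurable A ->
    measurable [set xy : X * bool | xy.1 \in A /\ xy.2 = b].
  move=> A b mA.
  have -> : [set xy : X * bool | xy.1 \in A /\ xy.2 = b] = A `*` [set b].
    by apply/seteqP; split => -[x y] /=; rewrite /setX /= in_setE.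
  exact: measurableX.
have mL : forall b, measurable [set xy : X * bool | xy.2 = b].
  move=> b; have -> : [set xy : X * bool | xy.2 = b] = setT `*` [set b].
    by apply/seteqP; split => -[x y]; rewrite /setX /=; [move=> -> | move=> [_ ->]].
  exact: measurableX.
have loss_split : forall P : probability (X * bool)%type R, loss01 P h =
    Pr P [set xy | xy.1 \in A0 /\ xy.2 = false] +
    Pr P [set xy | xy.1 \in A1 /\ xy.2 = true].
  move=> P; rewrite /loss01 -PrU; [|exact: mE (mpre _)|exact: mE (mpre _)|].
    congr Pr; apply/seteqP; split => -[x y] /=; rewrite /A0 /A1 !in_setE /=;
      by case: (h x); case: y => //=; intuition discriminate.
  rewrite -subset0 => -[x y] /=; rewrite !in_setE /A0 /A1 /= => -[[H1 _] [H2 _]].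
  by rewrite H1 in H2.
have ltrue : forall P : probability (X * bool)%type R,
    label_prob P true = 1 - label_prob P false.
  move=> P; rewrite /label_prob -PrC //; congr Pr.
  by apply/seteqP; split => -[x y] /=; case: y.
have H0 := Hcc false A0 (mpre true).
have H1 := Hcc true A1 (mpre false).
move: Hl H0 H1; rewrite /class_cond !loss_split !ltrue.
set p := label_prob D false; set q := label_prob Dshift false.
set a0 := Pr D _; set a1 := Pr D _; set s0 := Pr Dshift _; set s1 := Pr Dshift _.
move=> Hl H0 H1.
have Sq1' : 1/2 + b2 <= q := Sq1. have Sq2' : q <= 1/2 + b3 := Sq2.
have Dp1' : 1/2 - b1 <= p := Dp1. have Dp2' : p <= 1/2 + b1 := Dp2.
clear Sq1 Sq2 Dp1 Dp2.
have qn0 : q != 0 by apply/eqP => q0; lra.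
have qn1 : 1 - q != 0 by apply/eqP => q0; lra.
have E0 : s0 = q * (a0 / p) by rewrite -H0 mulrC divfK.
have E1 : s1 = (1 - q) * (a1 / (1 - p)) by rewrite -H1 mulrC divfK.
rewrite E0 E1 in Hl.
have := @alg R p q a0 a1.
have : 0 <= a0 by apply: Pr_ge0.
have : 0 <= a1 by apply: Pr_ge0.
move=> a10 a00 Halg.
have hp0 : 0 < p by lra.
have hpq : p < q by lra.
have hq1 : q < 1 by lra.
have Hf := Halg hp0 hpq hq1 a00 a10 Hl.
have hb : (1 - p) / 2 <= 1/4 + b1/2 by lra.
exact: le_trans Hf hb.
Qed.
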